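(* Let $\mathbf{P}$ be the convex hull of $\{\chi_\mu : \mu \text{ is a non-uniformly stable matching in } G\}$ and let $\mathbf{S}$ be the set of vectors $x\in\mathbb{R}_+^E$ satisfying (1) $x(E(v))\le 1$ for all $v\in V$; (2) $x(e)+\sum_{v\in e}x(E[\succ_v e])\ge 1$ for all $e\in E_1$; (3) $x(E[\sim_v e])+\sum_{w\in e}x(E[\succ_w e])\ge 1$ for all $e\in E_2$ and all $v\in e$. Then $\mathbf{P}=\mathbf{S}$.
   Context: Setting: $G=(V,E)$ is a finite simple bipartite graph with $V=V_1\sqcup V_2$, every edge joining a vertex of $V_1$ to a vertex of $V_2$; an edge is identified with the set of its two endpoints. $E$ is partitioned into $E_1,E_2$ ($E_1\cap E_2=\emptyset$, $E_1\cup E_2=E$). For $F\subseteq E$ and $v\in V$, $F(v)$ is the set of edges of $F$ incident to $v$. For every $v\in V$ there is a transitive and complete binary relation $\succsim_v$ on $E(v)\cup\{\emptyset\}$ with $e\succsim_v\emptyset$ and $\emptyset\not\succsim_v e$ for all $e\in E(v)$; $e\succ_v f$ means $e\succsim_v f$ and $f\not\succsim_v e$; $e\sim_v f$ means both $e\succsim_v f$ and $f\succsim_v e$. A matching is $\mu\subseteq E$ with $|\mu(v)|\le1$ for all $v$; $\mu(v)$ denotes the unique edge of $\mu$ at $v$, or $\emptyset$ if none. An edge $e\in E\setminus\mu$ weakly blocks $\mu$ if $e\succsim_v\mu(v)$ for every $v\in e$; it strongly blocks $\mu$ if additionally $e\succ_w\mu(w)$ for some $w\in e$. A matching $\mu$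 is non-uniformly stable if no edge of $E_1\setminus\mu$ weakly blocks $\mu$ and no edge of $E_2\setminus\mu$ strongly blocks $\mu$. For $x\in\mathbb{R}_+^E$ and $F\subseteq E$, $x(F)=\sum_{e\in F}x(e)$; $\chi_F\in\{0,1\}^E$ is the characteristic vector of $F$. For $v\in V$ and $e\in E(v)$: $E[\succ_v e]=\{f\in E(v): f\succ_v e\}$ and $E[\sim_v e]=\{f\in E(v): f\sim_v e\}$. *)

(* Defs.v *)
From mathcomp Require Import all_boot all_order all_algebra.
Set Implicit Arguments. Unset Strict Implicit. Unset Printing Implicit Defensive.
Import Order.TTheory GRing.Theory Num.Theory.
Local Open Scope ring_scope.

(* A finite simple bipartite graph: vertices V, side : V -> bool
   (V1 = side false, V2 = side true); each edge e joins src e (in V1) to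
   dst e (in V2); distinct edges have distinct endpoint pairs (simple). *)
Definition bipartite_simple (V E : finType) (side : V -> bool)
  (src dst : E -> V) : Prop :=
  (forall e, side (src e) = false) /\ (forall e, side (dst e) = true) /\
  injective (fun e => (src e, dst e)).

Definition incident (V E : finType) (src dst : E -> V) (e : E) (v : V) : bool :=
  (v == src e) || (v == dst e).

(* domain E(v) \cup {emptyset}: None stands for emptyset *)
Definition in_dom (V E : finType) (src dst : E -> V) (v : V) (a : option E) : bool :=
  if a is Some e then incident src dst e v else true.

Definition pref_ok (V E : finType) (src dst : E -> V)
  (pref : V -> option E -> option E -> bool) : Prop :=
  forall v,
    (forall a b, in_dom src dst v a -> in_dom src dst v b ->
       pref v a b || pref v b a) /\
    (forall a b c, in_dom src dst v a -> in_dom src dst v b -> in_dom src dst v c ->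
       pref v a b -> pref v b c -> pref v a c) /\
    (forall e, incident src dst e v -> pref v (Some e) None /\ ~~ pref v None (Some e)).

Definition spref (V E : finType) (pref : V -> option E -> option E -> bool)
  (v : V) (a b : option E) : bool := pref v a b && ~~ pref v b a.

Definition ipref (V E : finType) (pref : V -> option E -> option E -> bool)
  (v : V) (a b : option E) : bool := pref v a b && pref v b a.

Definition is_matching (V E : finType) (src dst : E -> V) (mu : {set E}) : Prop :=
  forall v, (#|[set e in mu | incident src dst e v]| <= 1)%N.

(* mu(v): the edge of mu at v, or None (emptyset) *)
Definition medge (V E : finType) (src dst : E -> V) (mu : {set E}) (v : V)
  : option E := [pick e in mu | incident src dst e v].

Definition weakly_blocks (V E : finType) (src dst : E -> V)
  (pref : V -> option E -> option E -> bool) (mu : {set E}) (e : E) : Prop :=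
  e \notin mu /\
  forall v, incident src dst e v -> pref v (Some e) (medge src dst mu v).

Definition strongly_blocks (V E : finType) (src dst : E -> V)
  (pref : V -> option E -> option E -> bool) (mu : {set E}) (e : E) : Prop :=
  weakly_blocks src dst pref mu e /\
  exists w, incident src dst e w /\ spref pref w (Some e) (medge src dst mu w).

(* E2 = ~: E1 *)
Definition nu_stable (V E : finType) (src dst : E -> V)
  (pref : V -> option E -> option E -> bool) (E1 : {set E}) (mu : {set E}) : Prop :=
  is_matching src dst mu /\
  (forall e, e \in E1 -> ~ weakly_blocks src dst pref mu e) /\
  (forall e, e \notin E1 -> ~ strongly_blocks src dst pref mu e).

Definition chi (R : realFieldType) (E : finType) (F : {set E}) (e : E) : R :=
  if e \in F then 1 else 0.

Definition in_conv_hull (R : realFieldType) (I E : finType) (P : I -> Prop)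
  (f : I -> E -> R) (x : E -> R) : Prop :=
  exists lam : I -> R,
    (forall i, 0 <= lam i) /\ (forall i, ~ P i -> lam i = 0) /\
    \sum_i lam i = 1 /\
    forall e, x e = \sum_i lam i * f i e.

Definition in_S (R : realFieldType) (V E : finType) (src dst : E -> V)
  (pref : V -> option E -> option E -> bool) (E1 : {set E}) (x : E -> R) : Prop :=
  (forall e, 0 <= x e) /\
  (forall v, \sum_(f | incident src dst f v) x f <= 1) /\
  (forall e, e \in E1 ->
     x e + \sum_(v | incident src dst e v)
             \sum_(f | incident src dst f v && spref pref v (Some f) (Some e)) x f
     >= 1) /\
  (forall e v, e \notin E1 -> incident src dst e v ->
     \sum_(f | incident src dst f v && ipref pref v (Some f) (Some e)) x f
     + \sum_(w | incident src dst e w)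
         \sum_(f | incident src dst f w && spref pref w (Some f) (Some e)) x f
     >= 1).

(* Main.v *)
Require Import Defs.
From mathcomp Require Import all_boot all_order all_algebra.
From Stdlib Require Import Classical FunctionalExtensionality.
From mathcomp Require Import ring lra.
Set Implicit Arguments. Unset Strict Implicit. Unset Printing Implicit Defensive.
Import Order.TTheory GRing.Theory Num.Theory.
Local Open Scope ring_scope.

Section Main.
Variables (R : realFieldType) (V E : finType) (side : V -> bool)
  (src dst : E -> V) (E1 : {set E})
  (pref : V -> option E -> option E -> bool).
Hypothesis Hbip : bipartite_simple side src dst.
Hypothesis Hpref : pref_ok src dst pref.

Local Notation inc := (incident src dst).
Local Notation sp := (spref pref).
Local Notation ip := (ipref pref).

Lemma src_dst e : src e != dst e.
Proof.
case: Hbip => h1 [h2 _]; apply/eqP => h.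
by move: (h1 e) (h2 e); rewrite h => ->.
Qed.

Lemma inc_src e : inc e (src e). Proof. by rewrite /incident eqxx. Qed.
Lemma inc_dst e : inc e (dst e). Proof. by rewrite /incident eqxx orbT. Qed.

Lemma sum_inc (F : V -> R) e : \sum_(v | inc e v) F v = F (src e) + F (dst e).
Proof.
rewrite (bigD1 (src e)) ?inc_src //= (bigD1 (dst e)) /=; last first.
  by rewrite inc_dst eq_sym src_dst.
rewrite big1 ?addr0 // => v /andP[/andP[]]; rewrite /incident.
by case/orP => /eqP -> ; rewrite eqxx.
Qed.

Lemma pref_tot v e f : inc e v -> inc f v ->
  pref v (Some e) (Some f) || pref v (Some f) (Some e).
Proof. by case: (Hpref v) => t _ he hf; apply: t. Qed.

Lemma pref_refl v e : inc e v -> pref v (Some e) (Some e).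
Proof. by move=> h; have := pref_tot h h; rewrite orbb. Qed.

Lemma pref_trans v e f g : inc e v -> inc f v -> inc g v ->
  pref v (Some e) (Some f) -> pref v (Some f) (Some g) -> pref v (Some e) (Some g).
Proof. by case: (Hpref v) => _ [t _] he hf hg; apply: t. Qed.

Lemma pref_none v e : inc e v -> pref v (Some e) None /\ ~~ pref v None (Some e).
Proof. by case: (Hpref v) => _ [_ t]; apply: t. Qed.

Lemma sum_lin (I J : finType) (P : pred J) (lam : I -> R) (g : I -> J -> R) :
  \sum_(f | P f) \sum_i lam i * g i f = \sum_i lam i * \sum_(f | P f) g i f.
Proof. by rewrite exchange_big; apply: eq_bigr => i _; rewrite mulr_sumr. Qed.

Lemma match_uniq mu v g h : is_matching src dst mu ->
  g \in mu -> inc g v -> h \in mu -> inc h v -> g = h.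
Proof.
move=> /(_ v) /card_le1_eqP H gm gi hm hi.
by apply: H; rewrite inE ?gm ?hm.
Qed.

Lemma medge_some mu v g : medge src dst mu v = Some g -> g \in mu /\ inc g v.
Proof. by rewrite /medge; case: pickP => // h /andP[a b] [<-]. Qed.

Lemma medge_none mu v g : medge src dst mu v = None -> g \in mu -> inc g v -> False.
Proof. by rewrite /medge; case: pickP => // H _ gm gi; move: (H g); rewrite /= gm gi. Qed.

Lemma medge_eq mu v g : is_matching src dst mu -> g \in mu -> inc g v ->
  medge src dst mu v = Some g.
Proof.
move=> hm gm gi; case H: (medge src dst mu v) => [h|].
  by case/medge_some: H => a b; rewrite (match_uniq hm gm gi a b).
by case: (medge_none H gm gi).
Qed.

Lemma chi_ge0 (mu : {set E}) f : 0 <= chi R mu f.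
Proof. by rewrite /chi; case: ifP. Qed.

Lemma chi_le1 (mu : {set E}) f : chi R mu f <= 1.
Proof. by rewrite /chi; case: ifP. Qed.

Lemma sum_chi_ge1 (mu : {set E}) (P : pred E) g : g \in mu -> P g -> 1 <= \sum_(f | P f) chi R mu f.
Proof.
move=> gm pg; rewrite (bigD1 g) //= {1}/chi gm lerDl.
by apply: sumr_ge0 => f _; apply: chi_ge0.
Qed.

Lemma sum_chi_le1 mu v (P : pred E) : is_matching src dst mu ->
  \sum_(f | inc f v && P f) chi R mu f <= 1.
Proof.
move=> hm; case: (pickP (fun f => (f \in mu) && inc f v && P f)) => [g /andP[/andP[gm gi] pg]|none].
  rewrite (bigD1 g) ?gi ?pg //= {1}/chi gm big1 ?addr0 // => f /andP[/andP[fi _] fg].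
  rewrite /chi; case: ifP => // fm.
  by move/eqP: fg; case; apply: (match_uniq hm fm fi gm gi).
rewrite big1 ?ler01 // => f /andP[fi pf]; rewrite /chi; case: ifP => // fm.
by move: (none f); rewrite fm fi pf.
Qed.

Lemma chi_in_S mu : nu_stable src dst pref E1 mu -> in_S src dst pref E1 (chi R mu).
Proof.
case=> hm [h1 h2]; split; [by move=> e; apply: chi_ge0|split].
  by move=> v; have := sum_chi_le1 v predT hm; under eq_bigl do rewrite andbT.
split.
  move=> e eE1; case: (boolP (e \in mu)) => em.
    rewrite {1}/chi em lerDl; apply: sumr_ge0 => v _; apply: sumr_ge0 => f _; exact: chi_ge0.
  have: exists v, inc e v /\ ~~ pref v (Some e) (medge src dst mu v).
    apply: NNPP => hn; apply: (h1 e eE1); split => // v hv.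
    by apply: NNPP => hp; apply: hn; exists v; split => //; apply/negP.
  case=> v [ev hp]; case H: (medge src dst mu v) hp => [g|]; last first.
    by rewrite (proj1 (pref_none ev)).
  move=> hp; case/medge_some: H => gm gv.
  have spg : sp v (Some g) (Some e).
    by rewrite /spref hp andbT; move: (pref_tot ev gv); rewrite (negbTE hp).
  apply: ler_wpDl; first by apply: chi_ge0.
  rewrite (bigD1 v) //= ler_wpDr //; last by apply: sum_chi_ge1 gm _; rewrite gv spg.
  by apply: sumr_ge0 => w _; apply: sumr_ge0 => f _; exact: chi_ge0.
move=> e v eE1 ev.
have pos : 0 <= \sum_(w | inc e w) \sum_(f | inc f w && sp w (Some f) (Some e)) chi R mu f.
  by apply: sumr_ge0 => w _; apply: sumr_ge0 => f _; exact: chi_ge0.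
have pos2 : 0 <= \sum_(f | inc f v && ip v (Some f) (Some e)) chi R mu f.
  by apply: sumr_ge0 => f _; exact: chi_ge0.
case: (boolP (e \in mu)) => em.
  apply: ler_wpDr => //; apply: sum_chi_ge1 em _.
  by rewrite ev /ipref pref_refl.
case: (classic (exists w, inc e w /\ ~~ pref w (Some e) (medge src dst mu w))).
  case=> w [ew hp]; case H: (medge src dst mu w) hp => [g|]; last first.
    by rewrite (proj1 (pref_none ew)).
  move=> hp; case/medge_some: H => gm gw.
  have spg : sp w (Some g) (Some e).
    by rewrite /spref hp andbT; move: (pref_tot ew gw); rewrite (negbTE hp).
  apply: ler_wpDl => //.
  rewrite (bigD1 w) //= ler_wpDr //; last by apply: sum_chi_ge1 gm _; rewrite gw spg.
  by apply: sumr_ge0 => u _; apply: sumr_ge0 => f _; exact: chi_ge0.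
move=> hn.
have allw : forall w, inc e w -> pref w (Some e) (medge src dst mu w).
  by move=> w ew; apply: NNPP => hp; apply: hn; exists w; split => //; apply/negP.
have nostrict : forall w, inc e w -> ~~ sp w (Some e) (medge src dst mu w).
  move=> w ew; apply/negP => hs; apply: (h2 e eE1); split; first by split.
  by exists w.
move: (allw v ev) (nostrict v ev); case H: (medge src dst mu v) => [g|]; last first.
  by rewrite /spref (proj2 (pref_none ev)) (proj1 (pref_none ev)).
case/medge_some: H => gm gv; rewrite /spref => pe; rewrite pe /= negbK => pg.
apply: ler_wpDr => //; apply: sum_chi_ge1 gm _.
by rewrite gv /ipref pg pe.
Qed.

Local Notation stab := (nu_stable src dst pref E1).
Local Notation hull := (in_conv_hull (fun mu : {set E} => stab mu) (fun mu => chi R mu)).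

Lemma conv_ge1 (lam : {set E} -> R) (F : {set E} -> R) :
  (forall i, 0 <= lam i) -> (forall i, ~ stab i -> lam i = 0) -> \sum_i lam i = 1 ->
  (forall i, stab i -> 1 <= F i) -> 1 <= \sum_i lam i * F i.
Proof.
move=> l0 lz l1 hF; rewrite -{1}l1; apply: ler_sum => i _.
case: (classic (stab i)) => hi; first by rewrite -{1}(mulr1 (lam i)) ler_wpM2l // hF.
by rewrite lz // !mul0r.
Qed.

Lemma conv_le1 (lam : {set E} -> R) (F : {set E} -> R) :
  (forall i, 0 <= lam i) -> (forall i, ~ stab i -> lam i = 0) -> \sum_i lam i = 1 ->
  (forall i, stab i -> F i <= 1) -> \sum_i lam i * F i <= 1.
Proof.
move=> l0 lz l1 hF; rewrite -[X in _ <= X]l1; apply: ler_sum => i _.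
case: (classic (stab i)) => hi; first by rewrite -{2}(mulr1 (lam i)) ler_wpM2l // hF.
by rewrite lz // !mul0r.
Qed.

Lemma hull_S x : hull x -> in_S src dst pref E1 x.
Proof.
case=> lam [l0 [lz [l1 hx]]].
have -> : x = (fun e => \sum_i lam i * chi R i e) by apply: functional_extensionality.
have cS := fun i (h : stab i) => chi_in_S h.
split; [|split; [|split]].
- by move=> e; apply: sumr_ge0 => i _; rewrite mulr_ge0 // chi_ge0.
- move=> v; rewrite sum_lin; apply: conv_le1 => // i /cS [_ [h _]]; exact: h.
- move=> e eE1.
  have -> : \sum_(v | inc e v) \sum_(f | inc f v && sp v (Some f) (Some e)) \sum_i lam i * chi R i f
     = \sum_i lam i * \sum_(v | inc e v) \sum_(f | inc f v && sp v (Some f) (Some e)) chi R i f.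
    by rewrite -sum_lin; apply: eq_bigr => v _; rewrite sum_lin.
  rewrite -big_split /=; under eq_bigr do rewrite -mulrDr.
  by apply: conv_ge1 => // i /cS [_ [_ [h _]]]; exact: h.
- move=> e v eE1 ev.
  have -> : \sum_(w | inc e w) \sum_(f | inc f w && sp w (Some f) (Some e)) \sum_i lam i * chi R i f
     = \sum_i lam i * \sum_(w | inc e w) \sum_(f | inc f w && sp w (Some f) (Some e)) chi R i f.
    by rewrite -sum_lin; apply: eq_bigr => w _; rewrite sum_lin.
  rewrite sum_lin -big_split /=; under eq_bigr do rewrite -mulrDr.
  by apply: conv_ge1 => // i /cS [_ [_ [_ h]]]; exact: h.
Qed.

Lemma hull_chi mu : stab mu -> hull (chi R mu).
Proof.
move=> hm; exists (fun i => if i == mu then 1 else 0); split; [|split; [|split]].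
- by move=> i; case: ifP.
- by move=> i hi; case: eqP => // ei; case: hi; rewrite ei.
- by rewrite (bigD1 mu) //= eqxx big1 ?addr0 // => i /negbTE ->.
- move=> e; rewrite (bigD1 mu) //= eqxx mul1r big1 ?addr0 // => i /negbTE ->.
  by rewrite mul0r.
Qed.

Lemma hull_comb (t : R) y z x : 0 <= t -> t <= 1 -> hull y -> hull z ->
  (forall e, x e = t * y e + (1 - t) * z e) -> hull x.
Proof.
move=> t0 t1 [ly [ly0 [lyz [ly1 hy]]]] [lz [lz0 [lzz [lz1 hz]]]] hx.
exists (fun i => t * ly i + (1 - t) * lz i); split; [|split; [|split]].
- by move=> i; rewrite addr_ge0 ?mulr_ge0 ?subr_ge0.
- by move=> i hi; rewrite lyz ?lzz // !mulr0 addr0.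
- by rewrite big_split /= -!mulr_sumr ly1 lz1 !mulr1 addrC subrK.
- move=> e; rewrite hx hy hz !mulr_sumr -big_split /=; apply: eq_bigr => i _.
  by rewrite /=; ring.
Qed.

Definition deg (x : E -> R) v := \sum_(f | inc f v) x f.
Definition ab (x : E -> R) v e := \sum_(f | inc f v && sp v (Some f) (Some e)) x f.
Definition ti (x : E -> R) v e := \sum_(f | inc f v && ip v (Some f) (Some e)) x f.
Definition be (x : E -> R) v e := \sum_(f | inc f v && sp v (Some e) (Some f)) x f.

Definition S' (x : E -> R) : Prop :=
  (forall e, 0 <= x e) /\ (forall v, deg x v <= 1) /\
  (forall e, e \in E1 -> 1 <= x e + ab x (src e) e + ab x (dst e) e) /\
  (forall e v, e \notin E1 -> inc e v -> 1 <= ti x v e + ab x (src e) e + ab x (dst e) e).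

Lemma S'E x : in_S src dst pref E1 x <-> S' x.
Proof.
rewrite /in_S /S'; split.
  case=> [h0 [h1 [h2 h3]]]; split => //; split => //; split.
    by move=> e eE; move: (h2 e eE); rewrite sum_inc addrA.
  by move=> e v eE ev; move: (h3 e v eE ev); rewrite sum_inc addrA.
case=> [h0 [h1 [h2 h3]]]; split => //; split => //; split.
  by move=> e eE; rewrite sum_inc addrA; apply: h2.
by move=> e v eE ev; rewrite sum_inc addrA; apply: h3.
Qed.

Lemma split3 x v e : inc e v -> deg x v = ab x v e + ti x v e + be x v e.
Proof.
move=> ev; rewrite /deg /ab /ti /be !big_mkcondr -!big_split /=.
apply: eq_bigr => f fv; rewrite /spref /ipref.
case pfe: (pref v (Some f) (Some e)); case pef: (pref v (Some e) (Some f)) => /=;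
  rewrite ?addr0 ?add0r //.
by move: (pref_tot fv ev); rewrite pfe pef.
Qed.

Lemma swap_ab x v : \sum_(e | inc e v) x e * ab x v e = \sum_(e | inc e v) x e * be x v e.
Proof.
rewrite /ab /be; under eq_bigr do rewrite mulr_sumr.
rewrite (exchange_big_dep (fun f => inc f v)) /=; last by move=> i j _ /andP[].
apply: eq_bigr => f fv; rewrite mulr_sumr; apply: eq_big => [e|e _]; last by rewrite mulrC.
by rewrite fv.
Qed.

Lemma quad x v : \sum_(e | inc e v) x e * (ti x v e / 2 + ab x v e) = deg x v ^+ 2 / 2.
Proof.
have H : \sum_(e | inc e v) x e * (ab x v e + ti x v e + be x v e) = deg x v ^+ 2.
  rewrite expr2 {2}/deg mulr_sumr; apply: eq_bigr => e ev; by rewrite -split3 // mulrC.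
have H2 := swap_ab x v.
move: H; rewrite (eq_bigr (fun e => x e * ab x v e + x e * ti x v e + x e * be x v e));
  last by move=> e _; rewrite !mulrDr.
rewrite !big_split /= -H2 => <-.
rewrite (eq_bigr (fun e => (x e * ti x v e) / 2 + x e * ab x v e)); last by move=> e _; rewrite mulrDr mulrA.
by rewrite big_split /= -mulr_suml; field.
Qed.

Lemma regroup (g : V -> E -> R) :
  \sum_e (g (src e) e + g (dst e) e) = \sum_v \sum_(e | inc e v) g v e.
Proof.
rewrite (eq_bigr (fun e => \sum_(v | inc e v) g v e)); last by move=> e _; rewrite sum_inc.
by rewrite (exchange_big_dep predT).
Qed.

Lemma ti_ge x v e : S' x -> inc e v -> x e <= ti x v e.
Proof.
move=> [h0 _] ev; rewrite /ti (bigD1 e) /=; last by rewrite ev /ipref pref_refl.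
by rewrite lerDl sumr_ge0.
Qed.

Lemma deg_ge0 x v : S' x -> 0 <= deg x v.
Proof. by move=> [h0 _]; apply: sumr_ge0. Qed.
Lemma ab_ge0 x v e : S' x -> 0 <= ab x v e.
Proof. by move=> [h0 _]; apply: sumr_ge0. Qed.
Lemma ti_ge0 x v e : S' x -> 0 <= ti x v e.
Proof. by move=> [h0 _]; apply: sumr_ge0. Qed.
Lemma be_ge0 x v e : S' x -> 0 <= be x v e.
Proof. by move=> [h0 _]; apply: sumr_ge0. Qed.

Definition cc x e := if e \in E1 then x e else (ti x (src e) e + ti x (dst e) e) / 2.

Lemma tight x : S' x ->
  (forall v, deg x v = 0 \/ deg x v = 1) /\
  (forall f, 0 < x f ->
     ti x (src f) f + ab x (src f) f + ab x (dst f) f = 1 /\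
     ti x (dst f) f + ab x (src f) f + ab x (dst f) f = 1 /\
     (f \in E1 -> ti x (src f) f = x f /\ ti x (dst f) f = x f)).
Proof.
move=> hS; have [h0 [h1 [h2 h3]]] := hS.
pose L e := cc x e + ab x (src e) e + ab x (dst e) e.
pose M e := (ti x (src e) e + ti x (dst e) e) / 2 + ab x (src e) e + ab x (dst e) e.
have L1 : forall e, 1 <= L e.
  move=> e; rewrite /L /cc; case: ifP => eE; first exact: h2.
  have a := h3 e _ (negbT eE) (inc_src e); have b := h3 e _ (negbT eE) (inc_dst e).
  lra.
have ccM : forall e, cc x e <= (ti x (src e) e + ti x (dst e) e) / 2.
  move=> e; rewrite /cc; case: ifP => // _.
  have a := ti_ge hS (inc_src e); have b := ti_ge hS (inc_dst e); lra.
pose D1 := \sum_e x e * (L e - 1).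
pose D2 := \sum_e x e * ((ti x (src e) e + ti x (dst e) e) / 2 - cc x e).
pose D3 := \sum_v (deg x v - deg x v ^+ 2) / 2.
have D1p : forall e, 0 <= x e * (L e - 1) by move=> e; rewrite mulr_ge0 // subr_ge0.
have D2p : forall e, 0 <= x e * ((ti x (src e) e + ti x (dst e) e) / 2 - cc x e).
  by move=> e; rewrite mulr_ge0 // subr_ge0.
have D3p : forall v, 0 <= (deg x v - deg x v ^+ 2) / 2.
  move=> v; have a := deg_ge0 v hS; have b := h1 v.
  rewrite divr_ge0 // subr_ge0 expr2; nra.
have sumM : \sum_e x e * M e = \sum_v deg x v ^+ 2 / 2.
  rewrite -(eq_bigr _ (fun v _ => quad x v)) -regroup; apply: eq_bigr => e _.
  rewrite /M; ring.
have sumdeg : \sum_v deg x v = \sum_e (x e + x e).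
  by rewrite (regroup (fun _ e => x e)).
have Z : D1 + D2 + D3 = 0.
  rewrite /D1 /D2 /D3 -!big_split /=.
  have -> : \sum_e (x e * (L e - 1) + x e * ((ti x (src e) e + ti x (dst e) e) / 2 - cc x e))
          = \sum_e x e * M e - \sum_e x e.
    rewrite -sumrB; apply: eq_bigr => e _; rewrite /L /M; ring.
  rewrite sumM.
  have -> : \sum_v (deg x v - deg x v ^+ 2) / 2 = \sum_v deg x v / 2 - \sum_v deg x v ^+ 2 / 2.
    by rewrite -sumrB; apply: eq_bigr => v _; ring.
  by rewrite -!mulr_suml sumdeg big_split /=; field.
have D10 : D1 = 0.
  have a : 0 <= D1 by apply: sumr_ge0.
  have b : 0 <= D2 by apply: sumr_ge0.
  have c : 0 <= D3 by apply: sumr_ge0.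
  lra.
have D20 : D2 = 0.
  have a : 0 <= D1 by apply: sumr_ge0.
  have b : 0 <= D2 by apply: sumr_ge0.
  have c : 0 <= D3 by apply: sumr_ge0.
  lra.
have D30 : D3 = 0.
  have a : 0 <= D1 by apply: sumr_ge0.
  have b : 0 <= D2 by apply: sumr_ge0.
  have c : 0 <= D3 by apply: sumr_ge0.
  lra.
split.
  move=> v; have hv : (deg x v - deg x v ^+ 2) / 2 = 0.
    by apply: (psumr_eq0P (fun v _ => D3p v) D30).
  have : deg x v * (1 - deg x v) == 0.
    by apply/eqP; move: hv; rewrite expr2 => hv; lra.
  rewrite mulf_eq0 subr_eq0 => /orP[] /eqP hh; [left|right] => //; by rewrite hh.
move=> f xf.
have e1 : x f * (L f - 1) == 0 by apply/eqP; apply: (psumr_eq0P (fun e _ => D1p e) D10).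
have e2 : x f * ((ti x (src f) f + ti x (dst f) f) / 2 - cc x f) == 0.
  by apply/eqP; apply: (psumr_eq0P (fun e _ => D2p e) D20).
move: e1; rewrite mulf_eq0 (gt_eqF xf) /= subr_eq0 => /eqP Lf.
move: e2; rewrite mulf_eq0 (gt_eqF xf) /= subr_eq0 => /eqP Cf.
move: Lf Cf; rewrite /L /cc; case: ifP => fE Lf Cf.
  have a := ti_ge hS (inc_src f); have b := ti_ge hS (inc_dst f).
  have c : ti x (src f) f = x f by lra.
  have d : ti x (dst f) f = x f by lra.
  by split; [lra|split; [lra|]].
have a := h3 f _ (negbT fE) (inc_src f); have b := h3 f _ (negbT fE) (inc_dst f).
by split; [lra|split; [lra|]].
Qed.

Lemma side_src f v : inc f v -> side v = false -> v = src f.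
Proof.
case: Hbip => _ [h2 _]; rewrite /incident => /orP[] /eqP -> //.
by rewrite h2.
Qed.

Lemma side_dst f v : inc f v -> side v = true -> v = dst f.
Proof.
case: Hbip => h1 _; rewrite /incident => /orP[] /eqP -> //.
by rewrite h1.
Qed.

Lemma term_le (x : E -> R) (P : pred E) g : (forall f, 0 <= x f) -> P g ->
  x g <= \sum_(f | P f) x f.
Proof. by move=> h0 pg; rewrite (bigD1 g) //= lerDl sumr_ge0. Qed.

Lemma sp_irr v a : ~~ sp v a a.
Proof. by rewrite /spref; case: (pref v a a). Qed.

Lemma sp_pref v a b c : inc a v -> inc b v -> inc c v ->
  sp v (Some a) (Some b) -> pref v (Some b) (Some c) -> sp v (Some a) (Some c).
Proof.
move=> ha hb hc /andP[pab npba] pbc; rewrite /spref (pref_trans ha hb hc pab pbc) /=.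
by apply/negP => pca; move: npba; rewrite (pref_trans hb hc ha pbc pca).
Qed.

Lemma pref_sp v a b c : inc a v -> inc b v -> inc c v ->
  pref v (Some a) (Some b) -> sp v (Some b) (Some c) -> sp v (Some a) (Some c).
Proof.
move=> ha hb hc pab /andP[pbc npcb]; rewrite /spref (pref_trans ha hb hc pab pbc) /=.
by apply/negP => pca; move: npcb; rewrite (pref_trans hc ha hb pca pab).
Qed.

Lemma sp_trans v a b c : inc a v -> inc b v -> inc c v ->
  sp v (Some a) (Some b) -> sp v (Some b) (Some c) -> sp v (Some a) (Some c).
Proof. by move=> ha hb hc h1 /andP[h2 _]; apply: (sp_pref ha hb hc h1 h2). Qed.

Lemma not_sp v a b : inc a v -> inc b v -> ~~ sp v (Some a) (Some b) -> pref v (Some b) (Some a).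
Proof.
move=> ha hb; rewrite /spref negb_and negbK => /orP[] // npab.
by move: (pref_tot ha hb); rewrite (negbTE npab).
Qed.

Lemma exists_max (P : pred E) (lt : rel E) :
  (forall g, ~~ lt g g) ->
  (forall a b c, P a -> P b -> P c -> lt a b -> lt b c -> lt a c) ->
  forall f0, P f0 -> exists f, P f /\ forall g, P g -> ~~ lt g f.
Proof.
move=> irr tr f0 pf0.
case: (arg_minnP (fun f => #|[set g | P g && lt g f]|) pf0) => f pf fmin.
exists f; split => // g pg; apply/negP => lgf.
have : (#|[set h | P h && lt h g]| < #|[set h | P h && lt h f]|)%N.
  apply: proper_card; apply/properP; split.
    by apply/subsetP => h; rewrite !inE => /andP[ph lhg]; rewrite ph (tr _ _ _ ph pg pf lhg lgf).
  by exists g; rewrite !inE ?pg ?lgf ?irr.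
by rewrite ltnNge fmin.
Qed.

Lemma deg1 x v : S' x -> 0 < deg x v -> deg x v = 1.
Proof. by move=> hS; case: (tight hS) => [h _]; case: (h v) => ->; rewrite ?ltxx. Qed.

Lemma deg_supp x v : S' x -> 0 < deg x v -> exists f, inc f v /\ 0 < x f.
Proof.
move=> [h0 _] hd; apply: NNPP => hn; move: hd; rewrite /deg big1 ?ltxx // => f fv.
apply/eqP; rewrite eq_le h0 andbT leNgt; apply/negP => hlt; apply: hn; exists f; split => //.
Qed.

Lemma align x f : S' x -> 0 < x f ->
  ti x (src f) f = ti x (dst f) f /\ ab x (src f) f = be x (dst f) f.
Proof.
move=> hS xf; case: (tight hS) => [_ h]; case: (h f xf) => [a [b _]].
have dd : deg x (dst f) = 1.
  apply: deg1 => //; apply: (lt_le_trans xf); apply: term_le; [by case: hS|exact: inc_dst].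
have := split3 x (inc_dst f); rewrite dd => c.
split; lra.
Qed.

Lemma ab0 x v e : S' x -> (forall g, inc g v -> 0 < x g -> ~~ sp v (Some g) (Some e)) ->
  ab x v e = 0.
Proof.
move=> [h0 _] h; rewrite /ab big1 // => g /andP[gv spg].
apply/eqP; rewrite eq_le h0 andbT leNgt; apply/negP => hlt.
by move: (h g gv hlt); rewrite spg.
Qed.

Lemma be0 x v e : S' x -> (forall g, inc g v -> 0 < x g -> ~~ sp v (Some e) (Some g)) ->
  be x v e = 0.
Proof.
move=> [h0 _] h; rewrite /be big1 // => g /andP[gv spg].
apply/eqP; rewrite eq_le h0 andbT leNgt; apply/negP => hlt.
by move: (h g gv hlt); rewrite spg.
Qed.

Lemma ti0 x v e : S' x -> (forall g, inc g v -> 0 < x g -> ~~ ip v (Some g) (Some e)) ->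
  ti x v e = 0.
Proof.
move=> [h0 _] h; rewrite /ti big1 // => g /andP[gv spg].
apply/eqP; rewrite eq_le h0 andbT leNgt; apply/negP => hlt.
by move: (h g gv hlt); rewrite spg.
Qed.

Definition Hs (x : E -> R) := [set f | (0 < x f) && (ab x (src f) f == 0)].

Lemma top_exists x v : S' x -> 0 < deg x v ->
  exists f, inc f v /\ 0 < x f /\ ab x v f = 0.
Proof.
move=> hS hd; case: (deg_supp hS hd) => f0 [f0v xf0].
have [f [/andP[fv xf] hf]] := @exists_max (fun g => inc g v && (0 < x g))
   (fun g f => sp v (Some g) (Some f)) (fun g => sp_irr v (Some g))
   (fun a b c ha hb hc => sp_trans (proj1 (andP ha)) (proj1 (andP hb)) (proj1 (andP hc)))
   f0 (introT andP (conj f0v xf0)).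
exists f; split => //; split => //; apply: ab0 => // g gv xg.
by apply: hf; rewrite gv xg.
Qed.

Lemma bot_exists x v : S' x -> 0 < deg x v ->
  exists f, inc f v /\ 0 < x f /\ be x v f = 0.
Proof.
move=> hS hd; case: (deg_supp hS hd) => f0 [f0v xf0].
have [f [/andP[fv xf] hf]] := @exists_max (fun g => inc g v && (0 < x g))
   (fun g f => sp v (Some f) (Some g)) (fun g => sp_irr v (Some g))
   (fun a b c ha hb hc h1 h2 => sp_trans (proj1 (andP hc)) (proj1 (andP hb)) (proj1 (andP ha)) h2 h1)
   f0 (introT andP (conj f0v xf0)).
exists f; split => //; split => //; apply: be0 => // g gv xg.
by apply: hf; rewrite gv xg.
Qed.

Lemma covering x v : S' x -> 0 < deg x v -> exists2 f, f \in Hs x & inc f v.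
Proof.
move=> hS hd; case sv: (side v).
  case: (bot_exists hS hd) => f [fv [xf bf]]; exists f => //.
  have ev := side_dst fv sv; rewrite inE xf /=; case: (align hS xf) => _ ->.
  by rewrite -ev bf.
case: (top_exists hS hd) => f [fv [xf bf]]; exists f => //.
have ev := side_src fv sv; by rewrite inE xf /= -ev bf.
Qed.

Lemma ker_nz (K : fieldType) (m n : nat) (A : 'M[K]_(m, n)) : (n < m)%N ->
  exists2 r : 'rV[K]_m, r != 0 & r *m A = 0.
Proof.
move=> nm; have hr : (0 < \rank (kermx A))%N.
  rewrite mxrank_ker subn_gt0; apply: leq_ltn_trans nm; exact: rank_leq_col.
have : kermx A != 0 by rewrite -mxrank_eq0 -lt0n.
case: (boolP [exists i, row i (kermx A) != 0]) => [/existsP[i hi] _|].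
  exists (row i (kermx A)) => //; by rewrite -row_mul mulmx_ker row0.
rewrite negb_exists => /forallP hall /negP []; apply/eqP/row_matrixP => i.
by move: (hall i); rewrite negbK row0 => /eqP.
Qed.

Lemma side_sum (d : E -> R) b :
  \sum_(v | side v == b) \sum_(f | inc f v) d f = \sum_f d f.
Proof.
rewrite (exchange_big_dep predT) //=; apply: eq_bigr => f _.
rewrite (big_pred1 (if b then dst f else src f)) // => v /=.
case: Hbip => h1 [h2 _]; rewrite /incident.
have [es|ns] := eqVneq v (src f); have [ed|nd] := eqVneq v (dst f).
- by move: (src_dst f); rewrite -es -ed ?eqxx.
- by rewrite es h1 ?eqxx /=; case: b; rewrite ?eqxx // (negbTE (src_dst f)).
- by rewrite ed h2 ?eqxx ?orbT /=; case: b; rewrite ?eqxx // (eq_sym (dst f)) (negbTE (src_dst f)).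
- by rewrite ?orbF andbF; case: b; rewrite ?(negbTE ns) ?(negbTE nd).
Qed.

Lemma ker_vec (F : {set E}) f0 : f0 \in F ->
  (forall f v, f \in F -> inc f v -> exists g, [/\ g \in F, g != f & inc g v]) ->
  exists d : E -> R, [/\ forall f, f \notin F -> d f = 0, exists f, d f != 0 &
                         forall v, \sum_(f | inc f v) d f = 0].
Proof.
move=> f0F hdeg.
pose VF := [set v | [exists f in F, inc f v]].
have v0VF : src f0 \in VF by rewrite inE; apply/existsP; exists f0; rewrite f0F inc_src.
pose W := VF :\ src f0.
have cardVF : (#|VF| <= #|F|)%N.
  pose N v := \sum_(f | (f \in F) && inc f v) (1 : R).
  have N0 : forall v, 0 <= N v by move=> v; apply: sumr_ge0.
  have sN : \sum_v N v = (#|F|%:R * 2 : R).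
    rewrite /N (exchange_big_dep (fun f => f \in F)) /=; last by move=> v f _ /andP[].
    rewrite -sum1_card natr_sum mulr_suml; apply: eq_bigr => f fF.
    rewrite (eq_bigl (fun v => inc f v)); last by move=> v; rewrite fF.
    by rewrite sum_inc mul1r.
  have N2 : forall v, v \in VF -> 2 <= N v.
    move=> v; rewrite inE => /existsP[f /andP[fF fv]].
    case: (hdeg f v fF fv) => g [gF gf gv].
    rewrite /N (bigD1 f) ?fF ?fv //= (bigD1 g) /= ?gF ?gv ?gf //.
    by rewrite addrA lerDl sumr_ge0.
  have : (#|VF|%:R * 2 : R) <= #|F|%:R * 2.
    rewrite -sN (bigID (fun v => v \in VF)) /= -[X in X <= _]addr0 lerD //; last by apply: sumr_ge0.
    by rewrite -sum1_card natr_sum mulr_suml; apply: ler_sum => v vV; rewrite mul1r N2.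
  by rewrite ler_pM2r // ler_nat.
have cardW : (#|W| < #|F|)%N.
  by move: cardVF; rewrite (cardsD1 (src f0) VF) v0VF.
pose A : 'M[R]_(#|F|, #|W|) := \matrix_(i, j) (inc (enum_val i) (enum_val j))%:R.
case: (ker_nz A cardW) => r rnz rA.
pose d f := \sum_(i < #|F| | enum_val i == f) r 0 i.
have dsum : forall v, \sum_(f | inc f v) d f = \sum_(i < #|F| | inc (enum_val i) v) r 0 i.
  move=> v; rewrite /d (exchange_big_dep (fun i : 'I_#|F| => inc (enum_val i) v)) /=;
    last by move=> f i fv /eqP ->.
  apply: eq_bigr => i iv; rewrite (big_pred1 (enum_val i)) // => f /=.
  have [->|nf] := eqVneq f (enum_val i); first by rewrite iv ?eqxx.
  by rewrite andbF.
have dF : forall f, f \notin F -> d f = 0.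
  move=> f fF; rewrite /d big1 // => i /eqP ei; move: (enum_valP i); rewrite ei.
  by rewrite (negbTE fF).
exists d; split => //.
  case: (boolP [exists i, r 0 i != 0]) => [/existsP[i ri]|].
    exists (enum_val i); rewrite /d (big_pred1 i) // => j /=.
    by rewrite (inj_eq enum_val_inj).
  rewrite negb_exists => /forallP hall; case/negP: rnz; apply/eqP/rowP => i.
  by move: (hall i); rewrite negbK mxE => /eqP.
have S0 : forall v, v != src f0 -> \sum_(f | inc f v) d f = 0.
  move=> v nv; case: (boolP (v \in VF)) => vV.
    have vW : v \in W by rewrite /W in_setD1 nv vV.
    have H : (r *m A) 0 (enum_rank_in vW v) = 0 by rewrite rA mxE.
    move: H; rewrite dsum !mxE => H; rewrite -[RHS]H big_mkcond /=; apply: eq_bigr => i _.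
    by rewrite mxE (enum_rankK_in vW vW); case: (inc _ v); rewrite ?mulr1 ?mulr0.
  rewrite big1 // => f fv; apply: dF; apply: contra vV => fF.
  by rewrite inE; apply/existsP; exists f; rewrite fF fv.
have T := side_sum d true; have Fa := side_sum d false.
have sf0 : side (src f0) = false by case: Hbip => h1 _; apply: h1.
have L : \sum_(v | side v == false) \sum_(f | inc f v) d f = \sum_(f | inc f (src f0)) d f.
  rewrite (bigD1 (src f0)) /=; last by rewrite sf0.
  rewrite [X in _ + X]big1 ?addr0 // => v /andP[_ nv]; exact: S0.
have Rr : \sum_(v | side v == true) \sum_(f | inc f v) d f = 0.
  by apply: big1 => v sv; apply: S0; apply: contraTneq sv => ->; rewrite sf0.
move=> v; case: (eqVneq v (src f0)) => [->|nv]; last exact: S0.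
by rewrite -L Fa -T Rr.
Qed.

Section CaseB.
Variable x : E -> R.
Hypothesis hS : S' x.
Hypothesis hB : forall f, f \in Hs x -> x f = ti x (src f) f.

Let h0 : forall f, 0 <= x f. Proof. by case: hS. Qed.

Lemma Hs_top f : f \in Hs x -> [/\ 0 < x f, ab x (src f) f = 0 & be x (dst f) f = 0].
Proof.
rewrite inE => /andP[xf /eqP a]; split => //.
by case: (align hS xf) => _ <-.
Qed.

Lemma tie_excl v g h : inc g v -> inc h v -> 0 < x h -> g != h ->
  ip v (Some h) (Some g) -> x g + x h <= ti x v g.
Proof.
move=> gv hv xh gh iph; rewrite /ti (bigD1 g) /=; last by rewrite gv /ipref pref_refl.
rewrite lerD2l (bigD1 h) /=; last by rewrite hv iph eq_sym.
by rewrite lerDl sumr_ge0.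
Qed.

Lemma ip_of v g h : inc g v -> inc h v -> ~~ sp v (Some g) (Some h) -> ~~ sp v (Some h) (Some g) ->
  ip v (Some h) (Some g).
Proof. by move=> gv hv a b; rewrite /ipref (not_sp gv hv a) (not_sp hv gv b). Qed.

Lemma Hs_match : is_matching src dst (Hs x).
Proof.
move=> v; apply/card_le1_eqP => g h; rewrite inE => /andP[gH gv]; rewrite inE => /andP[hH hv].
apply/eqP; apply: contraT; rewrite eq_sym => gh.
have [xg ag bg] := Hs_top gH; have [xh ah bh] := Hs_top hH.
case sv: (side v).
  have eg := side_dst gv sv; have eh := side_dst hv sv.
  have n1 : ~~ sp v (Some g) (Some h).
    apply/negP => hs; move: (term_le (P := fun f => inc f v && sp v (Some g) (Some f)) h0 (introT andP (conj hv hs))).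
    by rewrite -/(be x v g) eg bg leNgt xh.
  have n2 : ~~ sp v (Some h) (Some g).
    apply/negP => hs; move: (term_le (P := fun f => inc f v && sp v (Some h) (Some f)) h0 (introT andP (conj gv hs))).
    by rewrite -/(be x v h) eh bh leNgt xg.
  have := tie_excl gv hv xh (gh : g != h) (ip_of gv hv n1 n2).
  rewrite eg -(proj1 (align hS xg)) -hB //; lra.
have eg := side_src gv sv; have eh := side_src hv sv.
have n1 : ~~ sp v (Some g) (Some h).
  apply/negP => hs; move: (term_le (P := fun f => inc f v && sp v (Some f) (Some h)) h0 (introT andP (conj gv hs))).
  by rewrite -/(ab x v h) eh ah leNgt xg.
have n2 : ~~ sp v (Some h) (Some g).
  apply/negP => hs; move: (term_le (P := fun f => inc f v && sp v (Some f) (Some g)) h0 (introT andP (conj hv hs))).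
  by rewrite -/(ab x v g) eg ag leNgt xh.
have := tie_excl gv hv xh (gh : g != h) (ip_of gv hv n1 n2).
rewrite eg -hB //; lra.
Qed.

Lemma active_medge v g : inc g v -> 0 < x g ->
  exists m, [/\ medge src dst (Hs x) v = Some m, m \in Hs x & inc m v].
Proof.
move=> gv xg; have dp : 0 < deg x v.
  by apply: (lt_le_trans xg); apply: term_le.
case: (covering hS dp) => m mH mv; exists m; split => //.
by apply: medge_eq => //; apply: Hs_match.
Qed.

Lemma abu0 e : pref (src e) (Some e) (medge src dst (Hs x) (src e)) -> ab x (src e) e = 0.
Proof.
move=> hp; apply: ab0 => // g gu xg; apply/negP => spg.
case: (active_medge gu xg) => m [me mH mu]; rewrite me in hp.
have sv : side (src e) = false by case: Hbip => h1 _; apply: h1.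
have em := side_src mu sv.
have := sp_pref gu (inc_src e) mu spg hp.
move=> spgm; move: (term_le (P := fun f => inc f (src e) && sp (src e) (Some f) (Some m)) h0 (introT andP (conj gu spgm))).
have [_ am _] := Hs_top mH.
by rewrite -/(ab x (src e) m) em am leNgt xg.
Qed.

Lemma xe0 e : e \notin Hs x -> pref (src e) (Some e) (medge src dst (Hs x) (src e)) -> x e = 0.
Proof.
move=> eH hp; apply/eqP; rewrite eq_le h0 andbT leNgt; apply/negP => xe.
case: (active_medge (inc_src e) xe) => m [me mH mu]; rewrite me in hp.
have sv : side (src e) = false by case: Hbip => h1 _; apply: h1.
have em := side_src mu sv.
have [xm am _] := Hs_top mH.
have nsp : ~~ sp (src e) (Some e) (Some m).
  apply/negP => hs; move: (term_le (P := fun f => inc f (src e) && sp (src e) (Some f) (Some m)) h0 (introT andP (conj (inc_src e) hs))).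
  by rewrite -/(ab x (src e) m) em am leNgt xe.
have ipe : ip (src e) (Some e) (Some m) by rewrite /ipref hp (not_sp (inc_src e) mu nsp).
have ne : m != e by apply: contraNneq eH => <-.
have := tie_excl mu (inc_src e) xe ne ipe.
by rewrite em -hB //; lra.
Qed.

Lemma tiu0 e : sp (src e) (Some e) (medge src dst (Hs x) (src e)) -> ti x (src e) e = 0.
Proof.
move=> hp; apply: ti0 => // g gu xg; apply/negP => ipg.
case: (active_medge gu xg) => m [me mH mu]; rewrite me in hp.
have sv : side (src e) = false by case: Hbip => h1 _; apply: h1.
have em := side_src mu sv.
have spgm := pref_sp gu (inc_src e) mu (proj1 (andP ipg)) hp.
move: (term_le (P := fun f => inc f (src e) && sp (src e) (Some f) (Some m)) h0 (introT andP (conj gu spgm))).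
have [_ am _] := Hs_top mH.
by rewrite -/(ab x (src e) m) em am leNgt xg.
Qed.

Lemma deg_le v g : inc g v -> x g <= deg x v.
Proof. by move=> gv; apply: term_le. Qed.

Lemma abw_lt1 e : pref (dst e) (Some e) (medge src dst (Hs x) (dst e)) -> ab x (dst e) e < 1.
Proof.
move=> hp; have dv := split3 x (inc_dst e).
have [a [b _]] := hS.
case: (boolP (0 < deg x (dst e))) => dp; last first.
  have z1 := ab_ge0 (dst e) e hS; have z2 := ti_ge0 (dst e) e hS; have z3 := be_ge0 (dst e) e hS.
  move: dp; rewrite -leNgt => dp; lra.
case: (covering hS dp) => m mH mw.
have me : medge src dst (Hs x) (dst e) = Some m by apply: medge_eq => //; apply: Hs_match.
rewrite me in hp.
have [xm _ _] := Hs_top mH.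
have : x m <= ti x (dst e) e + be x (dst e) e.
  case pme: (pref (dst e) (Some m) (Some e)).
    apply: ler_wpDr; first exact: be_ge0.
    by apply: term_le => //; rewrite mw /ipref pme hp.
  apply: ler_wpDl; first exact: ti_ge0.
  by apply: term_le => //; rewrite mw /spref hp pme.
move=> hm; have d1 := deg1 hS dp; have d2 := b (dst e); lra.
Qed.

Lemma tiabw_lt1 e : sp (dst e) (Some e) (medge src dst (Hs x) (dst e)) ->
  ti x (dst e) e + ab x (dst e) e < 1.
Proof.
move=> hp; have dv := split3 x (inc_dst e).
have [a [b _]] := hS.
case: (boolP (0 < deg x (dst e))) => dp; last first.
  have z1 := ab_ge0 (dst e) e hS; have z2 := ti_ge0 (dst e) e hS; have z3 := be_ge0 (dst e) e hS.
  move: dp; rewrite -leNgt => dp; lra.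
case: (covering hS dp) => m mH mw.
have me : medge src dst (Hs x) (dst e) = Some m by apply: medge_eq => //; apply: Hs_match.
rewrite me in hp.
have [xm _ _] := Hs_top mH.
have : x m <= be x (dst e) e by apply: term_le => //; rewrite mw hp.
move=> hm; have d1 := deg1 hS dp; have d2 := b (dst e); lra.
Qed.

Lemma Hs_stable : stab (Hs x).
Proof.
have [_ [_ [c1 c2]]] := hS.
split; first exact: Hs_match.
split.
  move=> e eE [eH hw].
  have a := abu0 (hw _ (inc_src e)); have b := xe0 eH (hw _ (inc_src e)).
  have c := abw_lt1 (hw _ (inc_dst e)); have := c1 e eE; lra.
move=> e eE [[eH hw] [w [ew hsw]]].
have a := abu0 (hw _ (inc_src e)).
case/orP: ew => /eqP wE; rewrite wE in hsw.
  have b := tiu0 hsw; have c := abw_lt1 (hw _ (inc_dst e)).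
  have := c2 e _ eE (inc_src e); lra.
have b := tiabw_lt1 hsw.
have := c2 e _ eE (inc_dst e); lra.
Qed.

End CaseB.

Lemma chi_sum01 (mu : {set E}) v (Q : pred E) : is_matching src dst mu ->
  (exists m, [/\ m \in mu, inc m v & Q m] /\ \sum_(f | inc f v && Q f) chi R mu f = 1) \/
  \sum_(f | inc f v && Q f) chi R mu f = 0.
Proof.
move=> hm; case: (pickP (fun f => (f \in mu) && inc f v && Q f)) => [g /andP[/andP[gm gi] pg]|none].
  left; exists g; split => //.
  rewrite (bigD1 g) ?gi ?pg //= {1}/chi gm big1 ?addr0 // => f /andP[/andP[fi _] fg].
  rewrite /chi; case: ifP => // fm.
  by move/eqP: fg; case; apply: (match_uniq hm fm fi gm gi).
right; rewrite big1 // => f /andP[fi pf]; rewrite /chi; case: ifP => // fm.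
by move: (none f); rewrite fm fi pf.
Qed.

Section Peel.
Variable x : E -> R.
Hypothesis hS : S' x.
Hypothesis hB : forall f, f \in Hs x -> x f = ti x (src f) f.
Variable eps : R.
Hypothesis e0 : 0 < eps.
Hypothesis e1 : eps < 1.
Hypothesis heps : forall f, f \in Hs x -> eps <= x f.

Lemma h0' : forall f, 0 <= x f. Proof. by case: hS. Qed.
Local Notation h0 := h0'.
Local Notation mu := (Hs x).
Lemma hm : is_matching src dst mu. Proof. exact: Hs_match hS hB. Qed.
Local Notation c := (chi R mu).
Local Notation x' := (fun f => (x f - eps * c f) / (1 - eps)).

Lemma xge f : eps * c f <= x f.
Proof.
rewrite /chi; case: ifP => fm; first by rewrite mulr1 heps.
by rewrite mulr0 h0.
Qed.

Lemma sum_peel (P : pred E) :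
  \sum_(f | P f) x' f = (\sum_(f | P f) x f - eps * \sum_(f | P f) c f) / (1 - eps).
Proof. by rewrite -mulr_suml sumrB mulr_sumr. Qed.

Lemma sum_ge (P : pred E) : eps * \sum_(f | P f) c f <= \sum_(f | P f) x f.
Proof. by rewrite mulr_sumr; apply: ler_sum => f _; apply: xge. Qed.

Lemma bot_all m w g : m \in mu -> inc m w -> side w = true -> inc g w -> 0 < x g ->
  ~~ sp w (Some m) (Some g).
Proof.
move=> mH mw sw gw xg; have ew := side_dst mw sw; have [_ _ bm] := Hs_top hS mH.
apply/negP => hs; move: (term_le (P := fun f => inc f w && sp w (Some m) (Some f)) h0 (introT andP (conj gw hs))).
by rewrite -/(be x w m) ew bm leNgt xg.
Qed.

Lemma top_all m u g : m \in mu -> inc m u -> side u = false -> inc g u -> 0 < x g ->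
  ~~ sp u (Some g) (Some m).
Proof.
move=> mH mu_ su gu xg; have eu := side_src mu_ su; have [_ am _] := Hs_top hS mH.
apply/negP => hs; move: (term_le (P := fun f => inc f u && sp u (Some f) (Some m)) h0 (introT andP (conj gu hs))).
by rewrite -/(ab x u m) eu am leNgt xg.
Qed.

Lemma sw e : side (dst e) = true. Proof. by case: Hbip => _ [h2 _]; apply: h2. Qed.

Lemma Cfull e m : m \in mu -> inc m (dst e) -> sp (dst e) (Some m) (Some e) ->
  ab x (dst e) e = 1.
Proof.
move=> mH mw spm; have [xm _ _] := Hs_top hS mH.
have dp : 0 < deg x (dst e) by apply: (lt_le_trans xm); apply: (term_le h0) => //.
have d1 := deg1 hS dp; have dv := split3 x (inc_dst e).
have t0 : ti x (dst e) e = 0.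
  apply: ti0 => // g gw xg; apply/negP => /andP[pge peg].
  by move: (bot_all mH mw (sw e) gw xg); rewrite (sp_pref mw (inc_dst e) gw spm peg).
have b0 : be x (dst e) e = 0.
  apply: be0 => // g gw xg; apply/negP => hs.
  by move: (bot_all mH mw (sw e) gw xg); rewrite (sp_trans mw (inc_dst e) gw spm hs).
lra.
Qed.

Lemma Tfull e m : m \in mu -> inc m (dst e) -> ip (dst e) (Some m) (Some e) ->
  ti x (dst e) e + ab x (dst e) e = 1.
Proof.
move=> mH mw /andP[pme pem]; have [xm _ _] := Hs_top hS mH.
have dp : 0 < deg x (dst e) by apply: (lt_le_trans xm); apply: (term_le h0) => //.
have d1 := deg1 hS dp; have dv := split3 x (inc_dst e).
have b0 : be x (dst e) e = 0.
  apply: be0 => // g gw xg; apply/negP => hs.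
  by move: (bot_all mH mw (sw e) gw xg); rewrite (pref_sp mw (inc_dst e) gw pme hs).
lra.
Qed.

Lemma ab_peel v e : ab x' v e = (ab x v e - eps * ab c v e) / (1 - eps).
Proof. by rewrite /ab sum_peel. Qed.
Lemma ti_peel v e : ti x' v e = (ti x v e - eps * ti c v e) / (1 - eps).
Proof. by rewrite /ti sum_peel. Qed.

Lemma peel_S : S' x'.
Proof.
have e0' := e0; have e1' := e1.
have [_ [hd [c1 c2]]] := hS.
have d0 : 0 < 1 - eps by rewrite subr_gt0.
split; [|split; [|split]].
- move=> f; rewrite divr_ge0 ?subr_ge0 ?xge //; exact: ltW.
- move=> v; rewrite /deg sum_peel ler_pdivrMr // mul1r.
  have := chi_sum01 v predT hm; under eq_bigl do rewrite andbT.
  rewrite -/(deg x v); case=> [[m [[mH mv _] ->]]|].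
    have [xm _ _] := Hs_top hS mH.
    have dp : 0 < deg x v by apply: (lt_le_trans xm); apply: (term_le h0) => //.
    by rewrite (deg1 hS dp) mulr1.
  move=> hz; case: (boolP (0 < deg x v)) => dp.
    case: (covering hS dp) => m mH mv.
    have := sum_chi_ge1 (P := fun f => inc f v) mH mv; rewrite hz; lra.
  by rewrite hz mulr0 subr0; move: dp; rewrite -leNgt => dp; lra.
- move=> e eE; rewrite !ab_peel.
  have hx : 1 <= x e + ab x (src e) e + ab x (dst e) e by apply: c1.
  have hA := xge e.
  have hB' : eps * ab c (src e) e <= ab x (src e) e by apply: sum_ge.
  have hC : eps * ab c (dst e) e <= ab x (dst e) e by apply: sum_ge.
  have Bx0 : 0 <= ab x (src e) e by apply: ab_ge0.
  have Cx0 : 0 <= ab x (dst e) e by apply: ab_ge0.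
  rewrite -!mulrDl ler_pdivlMr // mul1r.
  have cA : c e = 0 \/ c e = 1 /\ e \in mu by rewrite /chi; case: ifP; [right|left].
  case: (chi_sum01 (src e) (fun f => sp (src e) (Some f) (Some e)) hm) => [[m [[mH mu_ spm] hb]]|hb];
  case: (chi_sum01 (dst e) (fun f => sp (dst e) (Some f) (Some e)) hm) => [[m' [[mH' mw spm'] hc]]|hc];
  rewrite -/(ab _ _ _) in hb; rewrite -/(ab _ _ _) in hc.
  + have cx1 := Cfull mH' mw spm'.
    case: cA => [ca|[ca _]]; rewrite ca hb hc in hA hB' hC *; have ? := h0 e; lra.
  + case: cA => [ca|[ca em]]; first by rewrite ca hb hc in hA hB' hC *; have ? := h0 e; lra.
    by move: spm; rewrite -(match_uniq hm em (inc_src e) mH mu_) (negbTE (sp_irr _ _)).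
  + have cx1 := Cfull mH' mw spm'.
    case: cA => [ca|[ca _]]; rewrite ca hb hc in hA hB' hC *; have ? := h0 e; lra.
  + case: cA => [ca|[ca _]]; rewrite ca hb hc in hA hB' hC *; have ? := h0 e; lra.
- move=> e v eE ev; rewrite !ab_peel ti_peel.
  have hx : 1 <= ti x v e + ab x (src e) e + ab x (dst e) e by apply: c2.
  have hA : eps * ti c v e <= ti x v e by apply: sum_ge.
  have hB' : eps * ab c (src e) e <= ab x (src e) e by apply: sum_ge.
  have hC : eps * ab c (dst e) e <= ab x (dst e) e by apply: sum_ge.
  have Ax0 : 0 <= ti x v e by apply: ti_ge0.
  have Bx0 : 0 <= ab x (src e) e by apply: ab_ge0.
  have Cx0 : 0 <= ab x (dst e) e by apply: ab_ge0.
  rewrite -!mulrDl ler_pdivlMr // mul1r.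
  case: (chi_sum01 v (fun f => ip v (Some f) (Some e)) hm) => [[m0 [[mH0 mv0 ipm] ha]]|ha];
  case: (chi_sum01 (src e) (fun f => sp (src e) (Some f) (Some e)) hm) => [[m [[mH mu_ spm] hb]]|hb];
  case: (chi_sum01 (dst e) (fun f => sp (dst e) (Some f) (Some e)) hm) => [[m' [[mH' mw spm'] hc]]|hc];
  rewrite -/(ti _ _ _) in ha; rewrite -/(ab _ _ _) in hb; rewrite -/(ab _ _ _) in hc;
  rewrite ha hb hc in hA hB' hC *;
  try (have cx1 := Cfull mH' mw spm'; lra); try lra.
  case/orP: ev => /eqP ve.
    subst v; have := match_uniq hm mH0 mv0 mH mu_; move=> me; subst m0.
    by move: ipm spm => /andP[_ pem] /andP[_ /negP []].
  subst v; have t1 := Tfull mH0 mv0 ipm.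
  have : x m <= ab x (src e) e by apply: (term_le h0) => //; rewrite mu_ spm.
  have [xm _ _] := Hs_top hS mH.
  move=> ?; have ? := heps mH; lra.
Qed.

End Peel.

Lemma ip_sym v a b : ip v a b = ip v b a.
Proof. by rewrite /ipref andbC. Qed.

Lemma ip_trans v a b c : inc a v -> inc b v -> inc c v ->
  ip v (Some a) (Some b) -> ip v (Some b) (Some c) -> ip v (Some a) (Some c).
Proof.
move=> ha hb hc /andP[p1 p2] /andP[p3 p4].
by rewrite /ipref (pref_trans ha hb hc p1 p3) (pref_trans hc hb ha p4 p2).
Qed.

Lemma ab_tie x v g f : inc g v -> inc f v -> ip v (Some g) (Some f) -> ab x v g = ab x v f.
Proof.
move=> gv fv /andP[pgf pfg]; rewrite /ab; apply: eq_bigl => h.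
case hv: (inc h v) => //=; apply/idP/idP => hs.
  exact: (sp_pref hv gv fv hs pgf).
exact: (sp_pref hv fv gv hs pfg).
Qed.

Lemma be_tie x v g f : inc g v -> inc f v -> ip v (Some g) (Some f) -> be x v g = be x v f.
Proof.
move=> gv fv /andP[pgf pfg]; rewrite /be; apply: eq_bigl => h.
case hv: (inc h v) => //=; apply/idP/idP => hs.
  exact: (pref_sp fv gv hv pfg hs).
exact: (pref_sp gv fv hv pgf hs).
Qed.

Lemma ti_tie x v g f : inc g v -> inc f v -> ip v (Some g) (Some f) -> ti x v g = ti x v f.
Proof.
move=> gv fv hgf; rewrite /ti; apply: eq_bigl => h.
case hv: (inc h v) => //=; apply/idP/idP => hs.
  exact: (ip_trans hv gv fv hs hgf).
by apply: (ip_trans hv fv gv hs); rewrite ip_sym.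
Qed.

Definition Fs (x : E -> R) := [set f | (f \in Hs x) && (x f < ti x (src f) f)].

Section CaseA.
Variable x : E -> R.
Hypothesis hS : S' x.

Lemma h0A : forall f, 0 <= x f. Proof. by case: hS. Qed.

Lemma Fs_prop f : f \in Fs x ->
  [/\ 0 < x f, ab x (src f) f = 0, be x (dst f) f = 0, x f < ti x (src f) f &
      ti x (src f) f = ti x (dst f) f].
Proof.
rewrite inE => /andP[fH lt]; have [xf a b] := Hs_top hS fH.
by split => //; case: (align hS xf).
Qed.

Lemma Fs_E2 f : f \in Fs x -> f \notin E1.
Proof.
move=> fF; have [xf _ _ lt _] := Fs_prop fF.
apply/negP => fE; case: (tight hS) => _ /(_ f xf) [_ [_ /(_ fE) [h _]]].
by move: lt; rewrite h ltxx.
Qed.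

Lemma ti_bound v f : inc f v -> x f < ti x v f -> exists g, [/\ inc g v, 0 < x g, g != f & ip v (Some g) (Some f)].
Proof.
move=> fv lt; apply: NNPP => hn; move: lt.
rewrite /ti (bigD1 f) /=; last by rewrite fv /ipref pref_refl.
rewrite big1 ?addr0 ?ltxx // => g /andP[/andP[gv ipg] gf].
apply/eqP; rewrite eq_le h0A andbT leNgt; apply/negP => xg.
by apply: hn; exists g; split.
Qed.

Lemma Fs_closed f v g : f \in Fs x -> inc f v -> inc g v -> 0 < x g -> ip v (Some g) (Some f) ->
  g \in Fs x.
Proof.
move=> fF fv gv xg igf; have [xf af bf ltf tf] := Fs_prop fF.
case: (eqVneq g f) => [->//|gf].
have hle := tie_excl hS fv gv xg (negbT (introF eqP (fun e => (negP gf) (introT eqP (esym e))))) igf.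
case sv: (side v).
  have ef := side_dst fv sv; have eg := side_dst gv sv.
  have [tg bg] := align hS xg.
  rewrite inE; apply/andP; split.
    rewrite inE xg /= bg -eg (be_tie x gv fv igf) ef bf //.
  rewrite tg -eg (ti_tie x gv fv igf).
  by apply: (lt_le_trans _ hle); rewrite ltrDr.
have ef := side_src fv sv; have eg := side_src gv sv.
rewrite inE; apply/andP; split.
  by rewrite inE xg /= -eg (ab_tie x gv fv igf) ef af.
rewrite -eg (ti_tie x gv fv igf).
by apply: (lt_le_trans _ hle); rewrite ltrDr.
Qed.

Lemma Fs_tied v f g : f \in Fs x -> g \in Fs x -> inc f v -> inc g v -> ip v (Some g) (Some f).
Proof.
move=> fF gF fv gv; have [xf af bf _ _] := Fs_prop fF; have [xg ag bg _ _] := Fs_prop gF.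
case sv: (side v).
  have ef := side_dst fv sv; have eg := side_dst gv sv.
  apply: (ip_of fv gv _ _).
    apply/negP => hs; move: (term_le (P := fun h => inc h v && sp v (Some f) (Some h)) h0A (introT andP (conj gv hs))).
    by rewrite -/(be x v f) ef bf leNgt xg.
  apply/negP => hs; move: (term_le (P := fun h => inc h v && sp v (Some g) (Some h)) h0A (introT andP (conj fv hs))).
  by rewrite -/(be x v g) eg bg leNgt xf.
have ef := side_src fv sv; have eg := side_src gv sv.
apply: (ip_of fv gv _ _).
  apply/negP => hs; move: (term_le (P := fun h => inc h v && sp v (Some h) (Some g)) h0A (introT andP (conj fv hs))).
  by rewrite -/(ab x v g) eg ag leNgt xf.
apply/negP => hs; move: (term_le (P := fun h => inc h v && sp v (Some h) (Some f)) h0A (introT andP (conj gv hs))).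
by rewrite -/(ab x v f) ef af leNgt xg.
Qed.

Lemma Fs_deg f v : f \in Fs x -> inc f v -> exists g, [/\ g \in Fs x, g != f & inc g v].
Proof.
move=> fF fv; have [xf af bf ltf tf] := Fs_prop fF.
have lt : x f < ti x v f.
  case/orP: fv => /eqP ->; [by []|by rewrite -tf].
case: (ti_bound fv lt) => g [gv xg gf igf].
by exists g; split => //; apply: (Fs_closed fF fv gv xg igf).
Qed.

End CaseA.

Definition supp (x : E -> R) := [set f | 0 < x f].

Section Pert.
Variable x : E -> R.
Hypothesis hS : S' x.
Variable d : E -> R.
Hypothesis dsupp : forall f, f \notin Fs x -> d f = 0.
Hypothesis dvert : forall v, \sum_(f | inc f v) d f = 0.

Lemma sumQ v (Q : pred E) :
  (forall g h, g \in Fs x -> h \in Fs x -> inc g v -> inc h v -> Q g -> Q h) ->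
  \sum_(f | inc f v && Q f) d f = 0.
Proof.
move=> hQ; case: (pickP (fun g => (g \in Fs x) && inc g v && Q g)) => [g /andP[/andP[gF gv] qg]|none].
  rewrite -[RHS](dvert v) big_mkcondr /=; apply: eq_bigr => f fv.
  case qf: (Q f) => //; case: (boolP (f \in Fs x)) => fF; last by rewrite dsupp.
  by move: (hQ g f gF fF gv fv qg); rewrite qf.
rewrite big1 // => f /andP[fv qf]; apply: dsupp; apply/negP => fF.
by move: (none f); rewrite fF fv qf.
Qed.

Lemma ab_d v e : inc e v -> ab d v e = 0.
Proof.
move=> ev; apply: sumQ => g h gF hF gv hv spg.
exact: (pref_sp hv gv ev (proj1 (andP (Fs_tied hS gF hF gv hv))) spg).
Qed.

Lemma ti_d v e : inc e v -> ti d v e = 0.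
Proof.
move=> ev; apply: sumQ => g h gF hF gv hv ig.
exact: (ip_trans hv gv ev (Fs_tied hS gF hF gv hv) ig).
Qed.

Lemma deg_d v : deg d v = 0.
Proof. exact: dvert. Qed.

Lemma sum_pert (t : R) (P : pred E) :
  \sum_(f | P f) (x f + t * d f) = \sum_(f | P f) x f + t * \sum_(f | P f) d f.
Proof. by rewrite big_split /= mulr_sumr. Qed.

Lemma ab_pert (t : R) v e : ab (fun f => x f + t * d f) v e = ab x v e + t * ab d v e.
Proof. by rewrite /ab sum_pert. Qed.
Lemma ti_pert (t : R) v e : ti (fun f => x f + t * d f) v e = ti x v e + t * ti d v e.
Proof. by rewrite /ti sum_pert. Qed.
Lemma deg_pert (t : R) v : deg (fun f => x f + t * d f) v = deg x v + t * deg d v.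
Proof. by rewrite /deg sum_pert. Qed.

Lemma pert (t : R) : (forall f, 0 <= x f + t * d f) -> S' (fun f => x f + t * d f).
Proof.
have [_ [hd [c1 c2]]] := hS.
move=> hnn; split => //; split; [|split].
- by move=> v; rewrite deg_pert deg_d mulr0 addr0; apply: hd.
- move=> e eE; rewrite !ab_pert ab_d ?inc_src // ab_d ?inc_dst //.
  rewrite (dsupp (f := e)); last by apply/negP => /(Fs_E2 hS); rewrite eE.
  by rewrite !mulr0 !addr0; apply: c1.
- move=> e v eE ev; rewrite !ab_pert ti_pert.
  rewrite ab_d ?inc_src // ab_d ?inc_dst // ti_d //.
  by rewrite !mulr0 !addr0; apply: c2.
Qed.

Lemma move_step : forall g, d g < 0 -> exists t : R,
  [/\ 0 < t, forall f, 0 <= x f + t * d f & (#|supp (fun f => (x f + t * d f)%R)| < #|supp x|)%N].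
Proof.
have h0 := h0A hS.
move=> g dg.
have [f1 [df1 hmin]] := @exists_max (fun f => d f < 0)
  (fun a b => x a / - d a < x b / - d b) (fun a => negbT (ltxx _))
  (fun a b c _ _ _ => @lt_trans _ _ _ _ _) g dg.
have f1F : f1 \in Fs x by apply: contraT => /dsupp; move: df1 => /[swap] ->; rewrite ltxx.
have [xf1 _ _ _ _] := Fs_prop hS f1F.
have nd1 : 0 < - d f1 by rewrite oppr_gt0.
exists (x f1 / - d f1); split.
- by rewrite divr_gt0.
- move=> f; case: (ltP (d f) 0) => df.
    have := hmin f df; rewrite -leNgt => hle.
    have nd : 0 < - d f by rewrite oppr_gt0.
    have := ler_wpM2r (ltW nd) hle; rewrite divfK; last by rewrite gt_eqF.
    rewrite mulrN => h2; lra.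
  by rewrite addr_ge0 // mulr_ge0 // ltW // divr_gt0.
- apply: proper_card; apply/properP; split.
    apply/subsetP => f; rewrite !inE => hf.
    case: (boolP (f \in Fs x)) => fF; first by have [] := Fs_prop hS fF.
    by move: hf; rewrite (dsupp fF) mulr0 addr0.
  exists f1; first by rewrite inE.
  rewrite inE; apply/negP => hp; move: hp.
  have -> : x f1 + x f1 / - d f1 * d f1 = 0.
    by field; rewrite lt_eqF.
  by rewrite ltxx.
Qed.

End Pert.

Lemma neg_exists (d : E -> R) : \sum_f d f = 0 -> (exists f, d f != 0) -> exists g, d g < 0.
Proof.
move=> s0 [f df]; apply: NNPP => hn.
have nn : forall g, 0 <= d g.
  by move=> g; rewrite leNgt; apply/negP => hg; apply: hn; exists g.
have z : d f = 0 by apply: (psumr_eq0P (fun g _ => nn g) s0).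
by rewrite z eqxx in df.
Qed.

Lemma x_le1 x f : S' x -> x f <= 1.
Proof.
move=> hS; have [h0 [hd _]] := hS; apply: le_trans (hd (src f)).
by apply: term_le => //; apply: inc_src.
Qed.

Lemma step_main x : S' x -> (forall y, S' y -> (#|supp y| < #|supp x|)%N -> hull y) -> hull x.
Proof.
move=> hS IH; have h0 := h0A hS.
case: (pickP (mem (Fs x))) => [f0 f0F | noF].
  have [d [dsupp [f dnz] dvert]] := ker_vec f0F (fun f v fF fv => Fs_deg hS fF fv).
  have sd : \sum_f d f = 0 by rewrite -(side_sum d false) big1.
  have [g1 dg1] := neg_exists sd (ex_intro _ f dnz).
  have sd' : \sum_f - d f = 0 by rewrite sumrN sd oppr0.
  have nz' : - d f != 0 by rewrite oppr_eq0.
  have [g2 dg2] := @neg_exists (fun f => - d f) sd' (ex_intro _ f nz').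
  have dsupp' : forall f, f \notin Fs x -> - d f = 0 by move=> h hF; rewrite dsupp // oppr0.
  have dvert' : forall v, \sum_(f | inc f v) - d f = 0 by move=> v; rewrite sumrN dvert oppr0.
  have [t1 [t1p nn1 c1]] := move_step hS dsupp dg1.
  have [t2 [t2p nn2 c2]] := move_step hS dsupp' dg2.
  have hy := IH _ (pert hS dsupp dvert nn1) c1.
  have hz := IH _ (pert hS dsupp' dvert' nn2) c2.
  have tp : 0 < t1 + t2 by rewrite addr_gt0.
  apply: (hull_comb (t := t2 / (t1 + t2)) _ _ hy hz).
  - by rewrite divr_ge0 // ltW.
  - by rewrite ler_pdivrMr // mul1r lerDr ltW.
  - move=> e /=; field; by rewrite gt_eqF.
have hB : forall f, f \in Hs x -> x f = ti x (src f) f.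
  move=> f fH; have := noF f; rewrite /= inE fH /= => /negbT; rewrite -leNgt => hle.
  by apply/eqP; rewrite eq_le hle ti_ge // inc_src.
have hstab := Hs_stable hS hB.
case: (boolP [forall f in Hs x, x f == 1]) => [/forall_inP all1 | /forall_inP].
  have -> : x = chi R (Hs x); last exact: hull_chi.
  apply: functional_extensionality => f; rewrite /chi; case: ifP => fH; first exact/eqP/all1.
  apply/eqP; rewrite eq_le h0 andbT leNgt; apply/negP => xf.
  have dp : 0 < deg x (src f) by apply: (lt_le_trans xf); apply: term_le => //; apply: inc_src.
  have [m mH mv] := covering hS dp.
  have mf : f != m by apply: contraFneq fH => ->.
  have : x m + x f <= deg x (src f).
    rewrite /deg (bigD1 m) //= (bigD1 f) /= ?inc_src ?mf //.
    by rewrite addrA lerDl sumr_ge0.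
  have [_ [hd _]] := hS; have := hd (src f); rewrite (eqP (all1 m mH)); move=> ? ?; lra.
move=> /(_ _) hn.
have [f1 f1H xf1] : exists2 f, f \in Hs x & x f != 1.
  by apply: NNPP => hh; apply: hn => f fH; apply: NNPP => hf; apply: hh; exists f => //; apply/negP.
have [m0 [m0H hmin]] := @exists_max (mem (Hs x)) (fun a b => x a < x b)
  (fun a => negbT (ltxx _)) (fun a b c _ _ _ => @lt_trans _ _ _ _ _) f1 f1H.
set eps := x m0.
have heps : forall f, f \in Hs x -> eps <= x f by move=> f fH; rewrite leNgt hmin.
have [e0 _ _] := Hs_top hS m0H.
have e1 : eps < 1.
  apply: (le_lt_trans (heps f1 f1H)); rewrite lt_neqAle xf1 /=; exact: x_le1.
have hx' := peel_S hS hB e0 e1 heps.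
have hc : (#|supp (fun f => (x f - eps * chi R (Hs x) f) / (1 - eps))| < #|supp x|)%N.
  have d0 : 0 < 1 - eps by rewrite subr_gt0.
  apply: proper_card; apply/properP; split.
    apply/subsetP => f; rewrite !inE => hf; rewrite lt_def h0 andbT; apply/negP => /eqP xf.
    move: hf; rewrite xf /chi; case: ifP => fH.
      by have [] := Hs_top hS fH; rewrite xf ltxx.
    by rewrite mulr0 subr0 mul0r ltxx.
  exists m0; first by rewrite inE.
  by have m0H' : m0 \in Hs x := m0H; rewrite inE /chi m0H' mulr1 subrr mul0r ltxx.
have hy := IH _ hx' hc.
apply: (hull_comb (t := eps) _ _ (hull_chi hstab) hy).
- exact: ltW.
- exact: ltW.
- move=> e /=; rewrite /eps; field; by rewrite subr_eq0 eq_sym (lt_eqF e1).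
Qed.

Lemma S_hull x : S' x -> hull x.
Proof.
move=> hS; suff H : forall n y, S' y -> (#|supp y| < n)%N -> hull y by exact: (H _ x hS (ltnSn _)).
elim => [//|n IHn] y hSy hn; apply: (step_main hSy) => z hz hlt.
apply: (IHn z hz); apply: (leq_trans hlt); by rewrite -ltnS.
Qed.

End Main.

Theorem theorem4p1 (R : realFieldType) (V E : finType) (side : V -> bool)
  (src dst : E -> V) (E1 : {set E})
  (pref : V -> option E -> option E -> bool) :
  bipartite_simple side src dst ->
  pref_ok src dst pref ->
  forall x : E -> R,
    in_conv_hull (fun mu : {set E} => nu_stable src dst pref E1 mu)
      (fun mu => chi R mu) x
    <-> in_S src dst pref E1 x.
Proof.
move=> Hb Hp x; split; first exact: hull_S.
move=> hin; have hS := proj1 (S'E E1 pref Hb x) hin.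
exact: (S_hull Hb Hp hS).
Qed.
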